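(* Two tuples $(f_1,\dots,f_n),(g_1,\dots,g_n)\in M_{[0,1]}^n$ have the same type (over $\emptyset$) if and only if $\mathrm{im}(f_1,\dots,f_n)=\mathrm{im}(g_1,\dots,g_n)$.
   Context: $M_{[0,1]}$ is the set of continuous nondecreasing functions $f:[0,1]\to[0,1]$ with $f(0)=0$, $f(1)=1$, with the sup metric, regarded as a metric structure in the language of binary predicates $\varphi_\alpha$ ($\alpha\in\mathbb{Q}\cap[0,1]$), where $\varphi_\alpha(f,g)=f(t)$ for any $t$ with $f(t)+g(t)=\alpha$ (independent of the choice of $t$); this structure is interdefinable with Ben Yaacov's structure whose automorphism group is $\mathrm{Hom}^+([0,1])$, acting by $g\mapsto g\circ h^{-1}$. $\mathrm{im}(f_1,\dots,f_n)=\{(f_1(t),\dots,f_n(t)):t\in[0,1]\}\subseteq[0,1]^n$. *)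

(* Defs.v *)
From HB Require Import structures.
From mathcomp Require Import all_boot all_order all_algebra.
From mathcomp Require Import all_classical all_reals all_analysis.
From mathcomp Require Import Rstruct Rstruct_topology.
Set Implicit Arguments. Unset Strict Implicit. Unset Printing Implicit Defensive.
Import Order.TTheory GRing.Theory Num.Theory.
Local Open Scope classical_set_scope.
Local Open Scope ring_scope.

Notation RR := Rdefinitions.R.

(* An element of M_[0,1] is represented by a function RR -> RR; only its
   restriction to [0,1] matters (all notions below only look at [0,1]). *)
Definition inM (f : RR -> RR) : Prop :=
  [/\ {within `[0, 1], continuous f},
      {in `[0, 1] &, forall s t, s <= t -> f s <= f t},
      {in `[0, 1], forall t, 0 <= f t <= 1},
      f 0 = 0 & f 1 = 1].

Definition M01 : set (RR -> RR) := [set f | inM f].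

Definition supdist (f g : RR -> RR) : RR :=
  sup [set `|f t - g t| | t in `[0, 1]%classic].

(* phi_alpha(f,g) = f(t) for any t in [0,1] with f(t)+g(t) = alpha
   (the value does not depend on t, so the sup is that common value);
   alpha ranges over Q cap [0,1]. *)
Definition phi (a : rat) (f g : RR -> RR) : RR :=
  if (0 <= a) && (a <= 1) then
    sup [set f t | t in [set t | t \in `[0, 1] /\ f t + g t = ratr a]]
  else 0.

(* Formulas of continuous logic in the language {d} u {phi_alpha}:
   atomic formulas, continuous connectives of any finite arity, sup / inf. *)
Inductive formula : Type :=
  | FDist : nat -> nat -> formula
  | FPhi : rat -> nat -> nat -> formula
  | FConn : forall k : nat, ('rV[RR]_k -> RR) -> ('I_k -> formula) -> formula
  | FSup : nat -> formula -> formula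
  | FInf : nat -> formula -> formula.

Fixpoint wf (p : formula) : Prop :=
  match p with
  | FDist _ _ | FPhi _ _ _ => True
  | FConn k u args => continuous u /\ forall j, wf (args j)
  | FSup _ q | FInf _ q => wf q
  end.

Fixpoint free_in (x : nat) (p : formula) : Prop :=
  match p with
  | FDist i j | FPhi _ i j => x = i \/ x = j
  | FConn k u args => exists j, free_in x (args j)
  | FSup i q | FInf i q => x <> i /\ free_in x q
  end.

Definition upd (e : nat -> RR -> RR) (i : nat) (g : RR -> RR) :=
  fun x => if x == i then g else e x.

Fixpoint eval (e : nat -> RR -> RR) (p : formula) : RR :=
  match p with
  | FDist i j => supdist (e i) (e j)
  | FPhi a i j => phi a (e i) (e j)
  | FConn k u args => u (\row_j eval e (args j))
  | FSup i q => sup [set eval (upd e i g) q | g in M01]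
  | FInf i q => inf [set eval (upd e i g) q | g in M01]
  end.

(* environment given by an n-tuple (variables >= n get a dummy value,
   irrelevant for formulas with free variables among x_0..x_{n-1}) *)
Definition env (n : nat) (f : 'I_n -> RR -> RR) : nat -> RR -> RR :=
  fun x => odflt (fun t => t) (omap f (insub x)).

Definition same_type (n : nat) (f g : 'I_n -> RR -> RR) : Prop :=
  forall p : formula, wf p -> (forall x, free_in x p -> (x < n)%N) ->
    eval (env f) p = eval (env g) p.

Definition im (n : nat) (f : 'I_n -> RR -> RR) : set ('I_n -> RR) :=
  [set (fun i => f i t) | t in `[0, 1]%classic].

(* Main.v *)
Require Import Defs.
From HB Require Import structures.
From mathcomp Require Import all_boot all_order all_algebra.
From mathcomp Require Import all_classical all_reals all_analysis.
From mathcomp Require Import Rstruct Rstruct_topology.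
From mathcomp Require Import lra.
Import Order.TTheory GRing.Theory Num.Theory.
Set Implicit Arguments. Unset Strict Implicit. Unset Printing Implicit Defensive.
Local Open Scope classical_set_scope.
Local Open Scope ring_scope.

Lemma withinP (f : RR -> RR) (A : set RR) :
  {within A, continuous f} <->
  (forall x, A x -> forall e : RR, 0 < e -> exists2 d : RR, 0 < d &
     forall y, A y -> `|x - y| < d -> `|f x - f y| < e).
Proof.
rewrite subspace_continuousP; split.
- move=> H x Ax e e0.
  have := H x Ax (ball (f x) e) (nbhsx_ballx _ _ e0).
  rewrite /within /= => /nbhs_ballP [d d0 Hd].
  exists d => // y Ay xy; apply: (Hd y) => //.
- move=> H x Ax P /nbhs_ballP [e e0 He].
  have [d d0 Hd] := H x Ax e e0.
  rewrite /within /=; apply/nbhs_ballP; exists d => // y xy Ay.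
  by apply: He; apply: Hd.
Qed.

Definition I01 (t : RR) : Prop := 0 <= t <= 1.

Lemma I01E t : `[0, 1]%classic t = I01 t.
Proof. by rewrite /= in_itv /=. Qed.

Lemma I01in (t : RR) : (t \in (`[0, 1] : interval RR)) = (0 <= t <= 1).
Proof. by rewrite in_itv. Qed.

Lemma contP (f : RR -> RR) : {within `[0, 1], continuous f} <->
  (forall x, I01 x -> forall e : RR, 0 < e -> exists2 d : RR, 0 < d &
     forall y, I01 y -> `|x - y| < d -> `|f x - f y| < e).
Proof.
rewrite withinP; split => H x Ax e e0.
- have [d d0 Hd] := H x (Ax : `[0,1]%classic x) e e0.
  by exists d => // y Ay; apply: Hd.
- have [d d0 Hd] := H x (Ax : I01 x) e e0.
  by exists d => // y Ay; apply: Hd.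
Qed.

Record M01r (f : RR -> RR) : Prop := MkM01 {
  mc : forall x, I01 x -> forall e : RR, 0 < e -> exists2 d : RR, 0 < d &
     forall y, I01 y -> `|x - y| < d -> `|f x - f y| < e;
  mmono : forall s t, I01 s -> I01 t -> s <= t -> f s <= f t;
  mrange : forall t, I01 t -> 0 <= f t <= 1;
  m0 : f 0 = 0;
  m1 : f 1 = 1 }.

Lemma inM_M f : inM f -> M01r f.
Proof.
case=> c mo ra h0 h1; constructor => //.
by apply/contP.
Qed.

Lemma M_inM f : M01r f -> inM f.
Proof.
case=> c mo ra h0 h1; split => //.
by apply/contP.
Qed.

Lemma inMP f : inM f <-> M01r f.
Proof. by split; [apply: inM_M|apply: M_inM]. Qed.

Lemma inM_id : inM id.
Proof.
apply/inMP; constructor => //.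
- by move=> x _ e e0; exists e.
Qed.

Lemma inM_comp g h : inM g -> inM h -> inM (g \o h).
Proof.
move=> /inMP [gc gm gr g0 g1] /inMP [hc hm hr h0 h1].
apply/inMP; constructor => /=.
- move=> x Ix e e0.
  have [d1 d10 Hd1] := gc (h x) (hr x Ix) e e0.
  have [d2 d20 Hd2] := hc x Ix d1 d10.
  exists d2 => // y Iy xy; apply: Hd1; first exact: hr.
  exact: Hd2.
- by move=> s t Is It st; apply: gm; [exact: hr|exact: hr|exact: hm].
- by move=> t It; apply: gr; exact: hr.
- by rewrite h0 g0.
- by rewrite h1 g1.
Qed.

Lemma I01_0 : I01 0. Proof. by rewrite /I01 lexx ler01. Qed.
Lemma I01_1 : I01 1. Proof. by rewrite /I01 lexx ler01. Qed.

Lemma sum_same f g s t : M01r f -> M01r g -> I01 s -> I01 t ->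
  f s + g s = f t + g t -> f s = f t.
Proof.
move=> Mf Mg Is It.
wlog st : s t Is It / s <= t.
  move=> W; have [st|st] := lerP s t; first exact: W.
  by move=> E; symmetry; apply: W => //; exact: ltW.
have := mmono Mf Is It st; have := mmono Mg Is It st.
lra.
Qed.

Lemma sum_ex f g (v : RR) : M01r f -> M01r g -> 0 <= v <= 2 ->
  exists2 t, I01 t & f t + g t = v.
Proof.
move=> Mf Mg v02.
have c : {within `[0, 1], continuous (fun t => f t + g t)}.
  apply/contP => x Ix e e0.
  have e20 : 0 < e / 2 by rewrite divr_gt0.
  have [d1 d10 H1] := mc Mf Ix e20.
  have [d2 d20 H2] := mc Mg Ix e20.
  exists (Num.min d1 d2); first by rewrite lt_min d10 d20.
  move=> y Iy; rewrite lt_min => /andP[y1 y2].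
  have := H1 y Iy y1; have := H2 y Iy y2.
  move=> a b; rewrite (_ : f x + g x - (f y + g y) = (f x - f y) + (g x - g y)); last by lra.
  apply: (le_lt_trans (ler_normD _ _)); lra.
have [|t t01 ft] := @IVT _ (fun t => f t + g t) 0 1 v ler01 c.
  rewrite (m0 Mf) (m0 Mg) (m1 Mf) (m1 Mg) addr0.
  case/andP: v02 => v0 v2.
  apply/andP; split; first by rewrite ge_min v0.
  by rewrite le_max (_ : v <= 1 + 1) ?orbT //; lra.
by exists t => //; rewrite /I01 -I01in.
Qed.

Lemma phi_val a f g t : M01r f -> M01r g -> (0 <= a <= 1)%R -> I01 t ->
  f t + g t = ratr a -> phi a f g = f t.
Proof.
move=> Mf Mg a01 It ft; rewrite /phi a01.
rewrite (_ : [set f t0 | t0 in _] = [set f t]) ?sup1 //.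
apply/seteqP; split => [y [s [Is fs] <-]|y ->] /=.
- apply: (sum_same Mf Mg _ It); first by move: Is; rewrite I01in.
  by rewrite fs ft.
- by exists t => //; split => //; rewrite I01in.
Qed.

Lemma phi_ex a f g : M01r f -> M01r g -> (0 <= a <= 1)%R ->
  exists2 t, I01 t & f t + g t = ratr a.
Proof.
move=> Mf Mg /andP[a0 a1]; apply: sum_ex => //.
rewrite ler0q a0 /=; apply: (le_trans (y := 1)); last lra.
have : ratr a <= ratr (1 : rat) :> RR by rewrite ler_rat.
by rewrite rmorph1.
Qed.

Lemma sup_le_close (T : Type) (I : set T) (F G : T -> RR) (eps : RR) :
  I !=set0 -> (exists B : RR, forall t, I t -> G t <= B) ->
  (forall t, I t -> F t <= G t + eps) ->
  sup (F @` I) <= sup (G @` I) + eps.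
Proof.
move=> [t0 It0] [B HB] H.
have ubG : has_ubound (G @` I) by exists B => _ [t It <-]; exact: HB.
apply: ge_sup; first by exists (F t0), t0.
move=> _ [t It <-]; apply: (le_trans (H t It)); rewrite lerD2r.
by apply: ub_le_sup => //; exists t.
Qed.

Lemma sup_close (T : Type) (I : set T) (F G : T -> RR) (eps : RR) :
  I !=set0 -> (exists B : RR, forall t, I t -> `|F t| <= B) ->
  (exists B : RR, forall t, I t -> `|G t| <= B) ->
  (forall t, I t -> `|F t - G t| <= eps) ->
  `|sup (F @` I) - sup (G @` I)| <= eps.
Proof.
move=> I0 [B1 H1] [B2 H2] H.
have h1 : sup (G @` I) <= sup (F @` I) + eps.
  apply: sup_le_close => //.
  + by exists B1 => t It; apply: le_trans (H1 t It); exact: ler_norm.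
  + move=> t It; have := H t It; rewrite ler_norml => /andP[a b]; lra.
have h2 : sup (F @` I) <= sup (G @` I) + eps.
  apply: sup_le_close => //.
  + by exists B2 => t It; apply: le_trans (H2 t It); exact: ler_norm.
  + move=> t It; have := H t It; rewrite ler_norml => /andP[a b]; lra.
rewrite ler_norml; apply/andP; split; lra.
Qed.

Lemma sup_bound (T : Type) (I : set T) (F : T -> RR) (B : RR) :
  I !=set0 -> (forall t, I t -> `|F t| <= B) -> `|sup (F @` I)| <= B.
Proof.
move=> [t0 It0] H.
have ub : has_ubound (F @` I).
  by exists B => _ [t It <-]; apply: le_trans (H t It); exact: ler_norm.
rewrite ler_norml; apply/andP; split.
- have := H t0 It0; rewrite ler_norml => /andP[a _].
  apply: (le_trans a); apply: ub_le_sup => //; by exists t0.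
- apply: ge_sup; first by exists (F t0), t0.
  move=> _ [t It <-]; have := H t It; rewrite ler_norml => /andP[_ b] //.
Qed.

Lemma infE (T : Type) (I : set T) (F : T -> RR) :
  inf (F @` I) = - sup ((fun t => - F t) @` I).
Proof. by rewrite /inf image_comp. Qed.

Lemma inf_close (T : Type) (I : set T) (F G : T -> RR) (eps : RR) :
  I !=set0 -> (exists B : RR, forall t, I t -> `|F t| <= B) ->
  (exists B : RR, forall t, I t -> `|G t| <= B) ->
  (forall t, I t -> `|F t - G t| <= eps) ->
  `|inf (F @` I) - inf (G @` I)| <= eps.
Proof.
move=> I0 [B1 H1] [B2 H2] H; rewrite !infE -opprD normrN.
apply: sup_close => //.
- by exists B1 => t It; rewrite normrN; exact: H1.
- by exists B2 => t It; rewrite normrN; exact: H2.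
- by move=> t It; rewrite -opprD normrN; exact: H.
Qed.

Lemma inf_bound (T : Type) (I : set T) (F : T -> RR) (B : RR) :
  I !=set0 -> (forall t, I t -> `|F t| <= B) -> `|inf (F @` I)| <= B.
Proof.
move=> I0 H; rewrite infE normrN; apply: sup_bound => // t It.
by rewrite normrN; exact: H.
Qed.

Lemma I01_ne : (`[0, 1]%classic : set RR) !=set0.
Proof. by exists 0; rewrite I01E; exact: I01_0. Qed.

Lemma supdist_bound f g : M01r f -> M01r g -> `|supdist f g| <= 1.
Proof.
move=> Mf Mg; apply: sup_bound; first exact: I01_ne.
move=> t; rewrite I01E => It.
have := mrange Mf It; have := mrange Mg It.
move=> /andP[a b] /andP[c d]; rewrite normr_id ler_norml; apply/andP; split; lra.
Qed.

Lemma supdist_close f g f' g' (d : RR) : M01r f -> M01r g -> M01r f' -> M01r g' ->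
  (forall t, I01 t -> `|f t - f' t| <= d) -> (forall t, I01 t -> `|g t - g' t| <= d) ->
  `|supdist f g - supdist f' g'| <= d + d.
Proof.
move=> Mf Mg Mf' Mg' Hf Hg; apply: sup_close; first exact: I01_ne.
- exists 1 => t; rewrite I01E => It.
  have := mrange Mf It; have := mrange Mg It.
  move=> /andP[a b] /andP[c e]; rewrite normr_id ler_norml; apply/andP; split; lra.
- exists 1 => t; rewrite I01E => It.
  have := mrange Mf' It; have := mrange Mg' It.
  move=> /andP[a b] /andP[c e]; rewrite normr_id ler_norml; apply/andP; split; lra.
- move=> t; rewrite I01E => It.
  apply: le_trans (ler_dist_dist _ _) _.
  rewrite (_ : f t - g t - (f' t - g' t) = (f t - f' t) - (g t - g' t)); last by lra.
  apply: le_trans (ler_normB _ _) _; apply: lerD; [exact: Hf|exact: Hg].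
Qed.

Lemma phi_bound a f g : M01r f -> M01r g -> `|phi a f g| <= 1.
Proof.
move=> Mf Mg; case a01: ((0 <= a) && (a <= 1))%R; last by rewrite /phi a01 normr0.
have [t It ft] := phi_ex Mf Mg a01.
rewrite (phi_val Mf Mg a01 It ft); have := mrange Mf It.
by move=> /andP[a0 a1]; rewrite ger0_norm.
Qed.

Lemma phi_close1 a f g f' g' (d : RR) : M01r f -> M01r g -> M01r f' -> M01r g' ->
  (forall t, I01 t -> `|f t - f' t| <= d) -> (forall t, I01 t -> `|g t - g' t| <= d) ->
  phi a f g - phi a f' g' <= d + d + d.
Proof.
move=> Mf Mg Mf' Mg' Hf Hg.
case a01: ((0 <= a) && (a <= 1))%R; last first.
  rewrite /phi a01 subrr.
  have := Hf 0 I01_0; rewrite (m0 Mf) (m0 Mf') subrr normr0 => d0; lra.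
have [t It ft] := phi_ex Mf Mg a01.
have [t' It' ft'] := phi_ex Mf' Mg' a01.
rewrite (phi_val Mf Mg a01 It ft) (phi_val Mf' Mg' a01 It' ft').
have := Hf t' It'; have := Hg t' It'; have := Hf t It.
rewrite !ler_norml => /andP[a1 a2] /andP[b1 b2] /andP[c1 c2].
have [tt'|t't] := lerP t t'.
- have := mmono Mf It It' tt'; have := Hf 0 I01_0.
  rewrite (m0 Mf) (m0 Mf') subrr normr0 => d0; lra.
- have := mmono Mf It' It (ltW t't); have := mmono Mg It' It (ltW t't).
  have := Hf 0 I01_0; rewrite (m0 Mf) (m0 Mf') subrr normr0 => d0.
  lra.
Qed.

Lemma phi_close a f g f' g' (d : RR) : M01r f -> M01r g -> M01r f' -> M01r g' ->
  (forall t, I01 t -> `|f t - f' t| <= d) -> (forall t, I01 t -> `|g t - g' t| <= d) ->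
  `|phi a f g - phi a f' g'| <= d + d + d.
Proof.
move=> Mf Mg Mf' Mg' Hf Hg; rewrite ler_norml; apply/andP; split.
- rewrite lerNl opprB; apply: phi_close1 => // t It; rewrite distrC; auto.
- exact: phi_close1.
Qed.

Definition box k (B : RR) : set 'rV[RR]_k :=
  [set v | forall j, `[- B, B]%classic (v ord0 j)].

Arguments box : clear implicits.
Lemma box_compact (k : nat) (B : RR) : compact (box k B).
Proof.
by apply: (@rV_compact _ _ (fun=> `[- B, B]%classic)) => _; apply: segment_compact.
Qed.

Lemma mxballP k (x y : 'rV[RR]_k) r : 0 < r ->
  (forall j, `|x ord0 j - y ord0 j| < r) -> ball x r y.
Proof.
move=> r0 H; split => // i j; rewrite (ord1 i).
by rewrite /ball /=; apply: H.
Qed.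

Lemma mxballP' k (x y : 'rV[RR]_k) r : ball x r y ->
  (forall j, `|x ord0 j - y ord0 j| < r).
Proof. by case=> _ H j; have := H ord0 j; rewrite /ball /=. Qed.

Lemma HC k (u : 'rV[RR]_k -> RR) (K : set 'rV[RR]_k) : continuous u -> compact K ->
  forall eps : RR, 0 < eps -> exists2 d : RR, 0 < d & forall v w : 'rV[RR]_k, K v ->
    (forall j, `|v ord0 j - w ord0 j| < d) -> `|u v - u w| < eps.
Proof.
move=> cu cK eps e0.
have e20 : 0 < eps / 2 by rewrite divr_gt0.
pose P := (fun (d : RR) (v : 'rV[RR]_k) => forall w : 'rV[RR]_k, (forall j, `|v ord0 j - w ord0 j| < d) -> `|u v - u w| < eps).
have cov : forall x, K x -> \forall x' \near x & d \near (0 : RR)^'+, P d x'.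
move=> x Kx.
have := cu x (ball (u x) (eps / 2)) (nbhsx_ballx _ _ e20).
move=> /nbhs_ballP [r r0 Hr].
have r20 : 0 < r / 2 by rewrite divr_gt0.
exists (ball x (r / 2), [set d : RR | 0 < d /\ d < r / 2]).
  split; first exact: nbhsx_ballx.
  near=> d; split; near: d; [exact: nbhs_right_gt | exact: nbhs_right_lt].
move=> [x' d] [/= xx' [d0 dr]] w xw.
have h1 := mxballP' xx'.
have h2 : ball x r w.
  apply: mxballP => // j.
  rewrite (_ : x ord0 j - w ord0 j = (x ord0 j - x' ord0 j) + (x' ord0 j - w ord0 j)); last by lra.
  apply: (le_lt_trans (ler_normD _ _)).
  have := h1 j; have := xw j; lra.
have h3 : ball x r x'.
  apply: mxballP => // j; have := h1 j; lra.
have := Hr _ h2; have := Hr _ h3; rewrite /ball /= => a b.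
rewrite (_ : u x' - u w = (u x - u w) - (u x - u x')); last by lra.
apply: (le_lt_trans (ler_normB _ _)); lra.
have H := (compact_near_coveringP K).1 cK RR ((0 : RR)^'+) P.
have {}H : \forall d \near (0:RR)^'+, K `<=` P d.
  by apply: H => //; apply: cov.
have H1 : \forall d \near (0:RR)^'+, (K `<=` P d) /\ 0 < d.
  by apply: filterI => //; exact: nbhs_right_gt.
have [d [Hd d0]] : exists d, (K `<=` P d) /\ 0 < d by apply: filter_ex H1.
by exists d => // v w Kv vw; apply: Hd.
Unshelve. all: by end_near.
Qed.

Lemma cont_bound k (u : 'rV[RR]_k -> RR) (K : set 'rV[RR]_k) : continuous u -> compact K ->
  exists M : RR, forall v, K v -> `|u v| <= M.
Proof.
move=> cu cK.
have cK' : compact (u @` K) by apply: continuous_compact => //; exact: continuous_subspaceT.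
have [M [Mr HM]] := @compact_bounded _ RR^o (u @` K) cK'.
exists (M + 1) => v Kv; apply: (HM (M + 1)); first lra.
by exists v.
Qed.

Lemma finite_delta (T : finType) (P : T -> RR -> Prop) :
  (forall j d d', 0 < d' -> d' <= d -> P j d -> P j d') ->
  (forall j, exists2 d, 0 < d & P j d) -> exists2 d, 0 < d & forall j, P j d.
Proof.
move=> mono H.
suff : forall s : seq T, exists2 d, 0 < d & forall j, j \in s -> P j d.
  by case/(_ (enum T)) => d d0 Hd; exists d => // j; apply: Hd; rewrite mem_enum.
elim=> [|a s [d d0 Hd]]; first by exists 1.
have [da da0 Hda] := H a.
exists (Num.min d da); first by rewrite lt_min d0 da0.
move=> j; rewrite inE => /orP[/eqP->|js].
- by apply: mono Hda; [rewrite lt_min d0 da0|rewrite ge_min lexx orbT].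
- by apply: mono (Hd j js); [rewrite lt_min d0 da0|rewrite ge_min lexx].
Qed.

Notation ev := Defs.eval.

Definition okenv (e : nat -> RR -> RR) p := forall x, free_in x p -> M01r (e x).
Definition closeE (e e' : nat -> RR -> RR) p (d : RR) :=
  forall x, free_in x p -> forall t, I01 t -> `|e x t - e' x t| <= d.

Lemma M01_ne : M01 !=set0.
Proof. by exists id; exact: inM_id. Qed.

Lemma okenv_upd e i q g : okenv e (FSup i q) \/ okenv e (FInf i q) -> M01r g ->
  okenv (upd e i g) q.
Proof.
move=> H Mg x fx; rewrite /upd; case: eqP => [_//|xi].
by case: H => H; apply: H; split.
Qed.

Lemma closeE_upd e e' i q g d : closeE e e' (FSup i q) d \/ closeE e e' (FInf i q) d ->
  0 <= d -> closeE (upd e i g) (upd e' i g) q d.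
Proof.
move=> H d0 x fx t It; rewrite /upd; case: eqP => [_|xi]; first by rewrite subrr normr0.
by case: H => H; apply: H => //; split.
Qed.

Lemma le_sum_abs k (F : 'I_k -> RR) j : `|F j| <= \sum_i `|F i|.
Proof.
rewrite (bigD1 j) //= lerDl; apply: sumr_ge0 => i _; exact: normr_ge0.
Qed.

Lemma row_box k (F : 'I_k -> RR) (B : RR) : (forall j, `|F j| <= B) ->
  box k B (\row_j F j).
Proof.
move=> H j; rewrite mxE /= in_itv /= -ler_norml; exact: H.
Qed.

Lemma bound_eval p : wf p -> exists B : RR, forall e, okenv e p -> `|ev e p| <= B.
Proof.
elim: p => [i j|a i j|k u args IH|i q IH|i q IH] /=.
- move=> _; exists 1 => e ok; apply: supdist_bound; apply: ok => /=; auto.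
- move=> _; exists 1 => e ok; apply: phi_bound; apply: ok => /=; auto.
- move=> [cu wa].
  have [Bf HB] := fin_all_exists (fun j => IH j (wa j)).
  pose B0 : RR := \sum_j `|Bf j|.
  have [M HM] := cont_bound cu (@box_compact k B0).
  exists M => e ok; apply: HM; apply: row_box => j.
  apply: le_trans (le_sum_abs Bf j).
  apply: le_trans (ler_norm _); apply: HB => x fx; apply: ok; by exists j.
- move=> wq; have [B HB] := IH wq; exists B => e ok.
  apply: sup_bound; first exact: M01_ne.
  move=> g Mg; apply: HB; apply: okenv_upd; first by left.
  exact: inM_M.
- move=> wq; have [B HB] := IH wq; exists B => e ok.
  apply: inf_bound; first exact: M01_ne.
  move=> g Mg; apply: HB; apply: okenv_upd; first by right.
  exact: inM_M.
Qed.

Lemma closeE_mono e e' p d d' : d <= d' -> closeE e e' p d -> closeE e e' p d'.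
Proof. by move=> dd H x fx t It; apply: le_trans (H x fx t It) dd. Qed.

Lemma uc_eval p : wf p -> forall eps : RR, 0 < eps -> exists2 d : RR, 0 < d &
  forall e e', okenv e p -> okenv e' p -> closeE e e' p d ->
    `|ev e p - ev e' p| <= eps.
Proof.
elim: p => [i j|a i j|k u args IH|i q IH|i q IH] /=.
- move=> _ eps e0; exists (eps / 2); first by rewrite divr_gt0.
  move=> e e' ok ok' cl.
  have -> : eps = eps / 2 + eps / 2 by lra.
  apply: supdist_close; try (apply: ok || apply: ok'); rewrite /=; auto;
  move=> t It; apply: cl => //=; auto.
- move=> _ eps e0; exists (eps / 3); first by rewrite divr_gt0.
  move=> e e' ok ok' cl.
  have -> : eps = eps / 3 + eps / 3 + eps / 3 by lra.
  apply: phi_close; try (apply: ok || apply: ok'); rewrite /=; auto;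
  move=> t It; apply: cl => //=; auto.
- move=> [cu wa] eps e0.
  have [Bf HB] := fin_all_exists (fun j => bound_eval (wa j)).
  pose B0 : RR := \sum_j `|Bf j|.
  have [eta eta0 Heta] := HC cu (@box_compact k B0) e0.
  have eta20 : 0 < eta / 2 by rewrite divr_gt0.
  have [d d0 Hd] := @finite_delta _ (fun j d => forall e e', okenv e (args j) ->
      okenv e' (args j) -> closeE e e' (args j) d ->
      `|ev e (args j) - ev e' (args j)| <= eta / 2)
    (fun j d d' _ dd H e e' ok ok' cl => H e e' ok ok' (closeE_mono dd cl))
    (fun j => IH j (wa j) _ eta20).
  exists d => // e e' ok ok' cl.
  have inbox : forall e, okenv e (FConn u args) -> box k B0 (\row_j ev e (args j)).
    move=> e1 ok1; apply: row_box => j.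
    apply: le_trans (le_sum_abs Bf j).
    apply: le_trans (ler_norm _); apply: HB => x fx; apply: ok1; by exists j.
  apply/ltW/Heta; first exact: inbox.
  move=> j; rewrite !mxE; apply: le_lt_trans (Hd j e e' _ _ _) _.
  + by move=> x fx; apply: ok; exists j.
  + by move=> x fx; apply: ok'; exists j.
  + by move=> x fx; apply: cl; exists j.
  + lra.
- move=> wq eps e0; have [d d0 Hd] := IH wq eps e0.
  have [B HB] := bound_eval wq.
  exists d => // e e' ok ok' cl.
  apply: sup_close; first exact: M01_ne.
  + exists B => g Mg; apply: HB; apply: okenv_upd; [by left|exact: inM_M].
  + exists B => g Mg; apply: HB; apply: okenv_upd; [by left|exact: inM_M].
  + move=> g Mg; apply: Hd.
    * apply: okenv_upd; [by left|exact: inM_M].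
    * apply: okenv_upd; [by left|exact: inM_M].
    * apply: closeE_upd; [by left|exact: ltW].
- move=> wq eps e0; have [d d0 Hd] := IH wq eps e0.
  have [B HB] := bound_eval wq.
  exists d => // e e' ok ok' cl.
  apply: inf_close; first exact: M01_ne.
  + exists B => g Mg; apply: HB; apply: okenv_upd; [by right|exact: inM_M].
  + exists B => g Mg; apply: HB; apply: okenv_upd; [by right|exact: inM_M].
  + move=> g Mg; apply: Hd.
    * apply: okenv_upd; [by right|exact: inM_M].
    * apply: okenv_upd; [by right|exact: inM_M].
    * apply: closeE_upd; [by right|exact: ltW].
Qed.

Section Invariance.
Variables (H Hi : RR -> RR).
Hypotheses (HK : forall t, Hi (H t) = t) (HiK : forall t, H (Hi t) = t)
  (MH : M01r H) (MHi : M01r Hi).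

Lemma img_H (T : Type) (F : RR -> T) (C : RR -> Prop) :
  [set F (H t) | t in [set t | t \in (`[0, 1] : interval RR) /\ C (H t)]] =
  [set F t | t in [set t | t \in (`[0, 1] : interval RR) /\ C t]].
Proof.
apply/seteqP; split => y.
- case=> t [It Ct] <-; exists (H t) => //; split => //.
  by rewrite I01in; apply: (@mrange H MH t); move: It; rewrite I01in.
- case=> t [It Ct] <-; exists (Hi t); last by rewrite HiK.
  split; last by rewrite HiK.
  by rewrite I01in; apply: (@mrange Hi MHi t); move: It; rewrite I01in.
Qed.

Lemma img_H' (T : Type) (F : RR -> T) :
  [set F (H t) | t in `[0, 1]%classic] = [set F t | t in `[0, 1]%classic].
Proof.
have := img_H F (fun _ => True).
have E : forall P : RR -> Prop, [set t | t \in (`[0, 1] : interval RR) /\ P t] = [set t | t \in (`[0, 1] : interval RR) /\ True] -> True by [].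
rewrite (_ : [set t | t \in (`[0, 1] : interval RR) /\ True] = `[0, 1]%classic) //.
by apply/seteqP; split => t /=; [case|split].
Qed.

Lemma M01_compH g : M01 g -> M01 (g \o H).
Proof. by move=> Mg; apply: inM_comp => //; exact: M_inM. Qed.

Lemma M01_compHi g : M01 g -> M01 (g \o Hi).
Proof. by move=> Mg; apply: inM_comp => //; exact: M_inM. Qed.

Lemma inv_eval p e : ev (fun x => e x \o H) p = ev e p.
Proof.
elim: p e => [i j|a i j|k u args IH|i q IH|i q IH] e /=.
- by rewrite /supdist -(img_H' (fun s => `|e i s - e j s|)).
- rewrite /phi; case: ifP => // _; congr sup.
  exact: (img_H (e i) (fun s => e i s + e j s = ratr a)).
- by congr u; apply/rowP => j; rewrite !mxE IH.
- congr sup; apply/seteqP; split => y.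
  + case=> g Mg <-; exists (g \o Hi); first exact: M01_compHi.
    rewrite -IH; congr ev; apply/funext => x; rewrite /upd.
    by case: eqP => // _; apply/funext => t /=; rewrite HK.
  + case=> g Mg <-; exists (g \o H); first exact: M01_compH.
    rewrite -[RHS]IH; congr ev; apply/funext => x; rewrite /upd.
    by case: eqP.
- congr inf; apply/seteqP; split => y.
  + case=> g Mg <-; exists (g \o Hi); first exact: M01_compHi.
    rewrite -IH; congr ev; apply/funext => x; rewrite /upd.
    by case: eqP => // _; apply/funext => t /=; rewrite HK.
  + case=> g Mg <-; exists (g \o H); first exact: M01_compH.
    rewrite -[RHS]IH; congr ev; apply/funext => x; rewrite /upd.
    by case: eqP.
Qed.

End Invariance.

Definition cont01 (f : RR -> RR) := forall x, I01 x -> forall e : RR, 0 < e ->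
  exists2 d : RR, 0 < d & forall y, I01 y -> `|x - y| < d -> `|f x - f y| < e.

Definition sinc (A : RR -> RR) := forall s t, I01 s -> I01 t -> s < t -> A s < A t.

Lemma sinc_le A s t : sinc A -> I01 s -> I01 t -> (A s <= A t) = (s <= t).
Proof.
move=> sA Is It; have [st|ts] := lerP s t.
- have [->|st'] := eqVneq s t; first by rewrite lexx.
  by apply/ltW/sA => //; rewrite lt_neqAle st' st.
- by apply/negbTE; rewrite -ltNge; apply: sA.
Qed.

Lemma sinc_inj A s t : sinc A -> I01 s -> I01 t -> A s = A t -> s = t.
Proof.
move=> sA Is It E; apply/le_anti/andP; split.
- by rewrite -(sinc_le sA Is It) E.
- by rewrite -(sinc_le sA It Is) E.
Qed.

Lemma I01_dec t : I01 t \/ ~ I01 t.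
Proof. by rewrite /I01; case: (0 <= t <= 1); [left|right]. Qed.

Section InvBy.
Variables (A B : RR -> RR) (c : RR).
Hypotheses (sA : sinc A) (sB : sinc B) (cA : cont01 A) (cB : cont01 B)
  (A0 : A 0 = 0) (B0 : B 0 = 0) (A1 : A 1 = c) (B1 : B 1 = c).

Definition inv_by (A B : RR -> RR) (t : RR) : RR :=
  if (0 <= t <= 1) then xget 0 (fun s => I01 s /\ A s = B t) else t.

Lemma c_ge0 : 0 <= c.
Proof. by rewrite -A1 -A0 (sinc_le sA I01_0 I01_1) ler01. Qed.

Lemma inv_by_ex (X Y : RR -> RR) t : sinc X -> sinc Y -> cont01 X -> X 0 = 0 -> X 1 = c ->
  Y 0 = 0 -> Y 1 = c -> I01 t ->
  I01 (inv_by X Y t) /\ X (inv_by X Y t) = Y t.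
Proof.
move=> sX sY cX X0 X1 Y0 Y1 It; rewrite /inv_by; have -> : (0 <= t <= 1) = true by [].
suff h : exists s, I01 s /\ X s = Y t by exact: (xgetPex 0 h).
have cXw : {within `[0, 1], continuous X} by apply/contP.
have [|s s01 Xs] := @IVT _ X 0 1 (Y t) ler01 cXw.
  rewrite X0 X1; apply/andP; split.
  - rewrite ge_min; apply/orP; left; rewrite -Y0 (sinc_le sY I01_0 It).
    by case/andP: It.
  - rewrite le_max; apply/orP; right; rewrite -Y1 (sinc_le sY It I01_1).
    by case/andP: It.
by exists s; split => //; move: s01; rewrite I01in.
Qed.

Lemma inv_byK_gen X Y : sinc X -> sinc Y -> cont01 X -> cont01 Y ->
  X 0 = 0 -> X 1 = c -> Y 0 = 0 -> Y 1 = c ->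
  forall t, inv_by Y X (inv_by X Y t) = t.
Proof.
move=> sX sY cX cY X0 X1 Y0 Y1 t.
case: (I01_dec t) => It.
- have [I1 E1] := inv_by_ex sX sY cX X0 X1 Y0 Y1 It.
  have [I2 E2] := inv_by_ex sY sX cY Y0 Y1 X0 X1 I1.
  by apply: (sinc_inj sY I2 It); rewrite E2 E1.
- have E : forall X Y, inv_by X Y t = t.
    by move=> X' Y'; rewrite /inv_by; case: ifP => // h; exfalso; apply: It.
  by rewrite !E.
Qed.

Lemma inv_by_M : M01r (inv_by A B).
Proof.
have ex := fun t (It : I01 t) => inv_by_ex sA sB cA A0 A1 B0 B1 It.
have ex' := fun t (It : I01 t) => inv_by_ex sB sA cB B0 B1 A0 A1 It.
have H0 : inv_by A B 0 = 0.
  have [I E] := ex 0 I01_0; apply: (sinc_inj sA I I01_0); by rewrite E A0 B0.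
have H1 : inv_by A B 1 = 1.
  have [I E] := ex 1 I01_1; apply: (sinc_inj sA I I01_1); by rewrite E A1 B1.
have mono : forall s t, I01 s -> I01 t -> (inv_by A B s <= inv_by A B t) = (s <= t).
  move=> s t Is It; have [I1 E1] := ex s Is; have [I2 E2] := ex t It.
  by rewrite -(sinc_le sA I1 I2) E1 E2 (sinc_le sB Is It).
constructor => //.
- apply/contP; rewrite (_ : `[0, 1] = `[inv_by A B 0, inv_by A B 1]); last by rewrite H0 H1.
  apply: segment_inc_surj_continuous.
  + by move=> s t; rewrite !H0 !H1 !I01in => Is It; apply: mono.
  + rewrite !H0 !H1 => y /= Iy.
    have [I E] := ex' y Iy.
    exists (inv_by B A y) => //.
    exact: (inv_byK_gen sB sA cB cA B0 B1 A0 A1).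
- by move=> s t Is It st; rewrite mono.
- by move=> t It; have [I _] := ex t It.
Qed.

End InvBy.

Lemma cont01_add f g : cont01 f -> cont01 g -> cont01 (fun t => f t + g t).
Proof.
move=> cf cg x Ix e e0.
have e20 : 0 < e / 2 by rewrite divr_gt0.
have [d1 d10 H1] := cf x Ix _ e20.
have [d2 d20 H2] := cg x Ix _ e20.
exists (Num.min d1 d2); first by rewrite lt_min d10 d20.
move=> y Iy; rewrite lt_min => /andP[y1 y2].
have := H1 y Iy y1; have := H2 y Iy y2.
move=> a b; rewrite (_ : f x + g x - (f y + g y) = (f x - f y) + (g x - g y)); last by lra.
apply: (le_lt_trans (ler_normD _ _)); lra.
Qed.

Lemma cont01_cst (a : RR) : cont01 (fun=> a).
Proof. by move=> x _ e e0; exists 1 => // y _ _; rewrite subrr normr0. Qed.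

Lemma cont01_sum n (f : 'I_n -> RR -> RR) : (forall i, cont01 (f i)) ->
  cont01 (fun t => \sum_i f i t).
Proof.
move=> cf.
suff : forall s : seq 'I_n, cont01 (fun t => \sum_(i <- s) f i t).
  by move=> /(_ (index_enum _)).
elim=> [|a s IH].
- by under eq_fun do rewrite big_nil; exact: cont01_cst.
- under eq_fun do rewrite big_cons; exact: cont01_add.
Qed.

Lemma cont01_lin (d : RR) : cont01 (fun t => d * t).
Proof.
move=> x Ix e e0; exists (e / (`|d| + 1)); first by rewrite divr_gt0 // ltr_wpDl.
move=> y Iy xy; rewrite -mulrBr normrM.
have h : `|d| < `|d| + 1 by lra.
have hd : 0 < `|d| + 1 by rewrite ltr_wpDl.
rewrite ltr_pdivlMr // in xy.
apply: (le_lt_trans _ xy); rewrite mulrC ler_wpM2l //; lra.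
Qed.

Section Approx.
Variables (n : nat) (f g : 'I_n -> RR -> RR).
Hypotheses (Mf : forall i, M01r (f i)) (Mg : forall i, M01r (g i)) (Eim : im f = im g).
Variable (d : RR).
Hypothesis (d0 : 0 < d).

Definition Fs (h : 'I_n -> RR -> RR) (t : RR) := \sum_i h i t.
Definition Fd (h : 'I_n -> RR -> RR) (t : RR) := Fs h t + d * t.

Lemma Fs_mono (h : 'I_n -> RR -> RR) : (forall i, M01r (h i)) ->
  forall i s t, I01 s -> I01 t -> s <= t -> h i t - h i s <= Fs h t - Fs h s.
Proof.
move=> Mh i s t Is It st; rewrite /Fs -sumrB (bigD1 i) //= lerDl.
apply: sumr_ge0 => j _; rewrite subr_ge0; exact: (mmono (Mh j)).
Qed.

Lemma Fd_sinc (h : 'I_n -> RR -> RR) : (forall i, M01r (h i)) -> sinc (Fd h).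
Proof.
move=> Mh s t Is It st; rewrite /Fd.
have : Fs h s <= Fs h t.
  rewrite /Fs; apply: ler_sum => i _; apply: (mmono (Mh i)) => //; exact: ltW.
have : d * s < d * t by rewrite ltr_pM2l.
lra.
Qed.

Lemma Fd_cont (h : 'I_n -> RR -> RR) : (forall i, M01r (h i)) -> cont01 (Fd h).
Proof.
move=> Mh; apply: cont01_add; last exact: cont01_lin.
by apply: cont01_sum => i; exact: (mc (Mh i)).
Qed.

Lemma Fd0 (h : 'I_n -> RR -> RR) : (forall i, M01r (h i)) -> Fd h 0 = 0.
Proof.
move=> Mh; rewrite /Fd /Fs mulr0 addr0; apply: big1 => i _; exact: (m0 (Mh i)).
Qed.

Lemma Fd1 (h : 'I_n -> RR -> RR) : (forall i, M01r (h i)) -> Fd h 1 = n%:R + d.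
Proof.
move=> Mh; rewrite /Fd /Fs mulr1.
rewrite (eq_bigr (fun=> 1)); last by move=> i _; exact: (m1 (Mh i)).
by rewrite sumr_const card_ord.
Qed.

Lemma FdE h t : Fd h t = Fs h t + d * t. Proof. by []. Qed.

Definition Hf := inv_by (Fd f) (Fd g).
Definition Hg := inv_by (Fd g) (Fd f).

Lemma Hf_props :
  [/\ forall t, Hg (Hf t) = t, forall t, Hf (Hg t) = t, M01r Hf, M01r Hg &
      forall i t, I01 t -> `|f i (Hf t) - g i t| <= d].
Proof.
have sF := Fd_sinc Mf; have sG := Fd_sinc Mg.
have cF := Fd_cont Mf; have cG := Fd_cont Mg.
have F0 := Fd0 Mf; have G0 := Fd0 Mg; have F1 := Fd1 Mf; have G1 := Fd1 Mg.
split.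
- exact: (inv_byK_gen sF sG cF cG F0 F1 G0 G1).
- exact: (inv_byK_gen sG sF cG cF G0 G1 F0 F1).
- exact: (inv_by_M sF sG cF cG F0 G0 F1 G1).
- exact: (inv_by_M sG sF cG cF G0 F0 G1 F1).
- move=> i t It.
  have [I1 E1] := inv_by_ex sF sG cF F0 F1 G0 G1 It.
  have : im g (fun i => g i t) by exists t => //; rewrite I01E.
  rewrite -Eim => -[t' It' Et'].
  rewrite I01E in It'.
  have Eg : forall j, g j t = f j t' by move=> j; move: (congr1 (fun h => h j) Et') => /= ->.
  have EG : Fs g t = Fs f t' by rewrite /Fs; apply: eq_bigr => j _; rewrite Eg.
  move: E1; rewrite !FdE EG => E1.
  change (inv_by (Fd f) (Fd g) t) with (Hf t) in E1.
  change (inv_by (Fd f) (Fd g) t) with (Hf t) in I1.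
  rewrite Eg.
  have hH : 0 <= Hf t <= 1 := I1.
  have ht : 0 <= t <= 1 := It.
  have hd : `|Fs f (Hf t) - Fs f t'| <= d.
    rewrite (_ : Fs f (Hf t) - Fs f t' = d * t - d * Hf t); last by lra.
    rewrite -mulrBr normrM gtr0_norm // -[X in _ <= X]mulr1 ler_pM2l //.
    rewrite ler_norml; case/andP: hH => ? ?; case/andP: ht => ? ?; apply/andP; split; lra.
  apply: le_trans hd.
  have [st|ts] := lerP (Hf t) t'.
  + have a := Fs_mono Mf i I1 It' st; have b := mmono (Mf i) I1 It' st.
    rewrite distrC [X in _ <= X]distrC ger0_norm ?subr_ge0 //.
    exact: le_trans a (ler_norm _).
  + have a := Fs_mono Mf i It' I1 (ltW ts); have b := mmono (Mf i) It' I1 (ltW ts).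
    rewrite ger0_norm ?subr_ge0 //.
    exact: le_trans a (ler_norm _).
Qed.

End Approx.

Lemma env_ord n (f : 'I_n -> RR -> RR) (i : 'I_n) : env f i = f i.
Proof.
rewrite /env; case: insubP => [j _ /val_inj -> //|]; by rewrite ltn_ord.
Qed.

Lemma free_env n (f : 'I_n -> RR -> RR) p x :
  (forall x, free_in x p -> (x < n)%N) -> free_in x p ->
  exists i : 'I_n, x = i /\ env f x = f i.
Proof.
move=> Hp fx; have xn := Hp x fx.
by exists (Ordinal xn); split => //; rewrite -env_ord.
Qed.

Lemma eq_from_close (a b : RR) : (forall e : RR, 0 < e -> `|a - b| <= e) -> a = b.
Proof.
move=> H; apply/eqP; rewrite -subr_eq0 -normr_le0.
have [|h] := lerP `|a - b| 0 => // .
have := H (`|a - b| / 2); rewrite divr_gt0 // => /(_ isT) h2.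
lra.
Qed.

Lemma dirA n (f g : 'I_n -> RR -> RR) : (forall i, inM (f i)) -> (forall i, inM (g i)) ->
  im f = im g -> same_type f g.
Proof.
move=> Hf Hg Eim p wp fv.
have Mf : forall i, M01r (f i) by move=> i; exact: inM_M.
have Mg : forall i, M01r (g i) by move=> i; exact: inM_M.
apply: eq_from_close => eps e0.
have [d d0 Hd] := uc_eval wp e0.
have [HK HiK MH MHi Hcl] := Hf_props Mf Mg Eim d0.
rewrite -(inv_eval HK HiK MH MHi p (env f)).
apply: Hd.
- move=> x fx; have [i [-> E]] := free_env f fv fx.
  rewrite env_ord; apply: inM_M; apply: inM_comp; [exact: Hf|exact: M_inM].
- move=> x fx; have [i [-> E]] := free_env g fv fx.
  by rewrite E.
- move=> x fx t It; have [i [-> E]] := free_env g fv fx.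
  rewrite E /= env_ord; exact: Hcl.
Qed.

Lemma contR (h : RR -> RR) : (forall x (e : RR), 0 < e -> exists2 d : RR, 0 < d &
  forall y, `|x - y| < d -> `|h x - h y| < e) -> continuous h.
Proof.
move=> H x P /nbhs_ballP [e e0 He]; have [d d0 Hd] := H x e e0.
apply/nbhs_ballP; exists d => // y xy; apply: He; exact: Hd.
Qed.
Lemma lip1 (h : RR -> RR) : (forall x y, `|h x - h y| <= `|x - y|) -> continuous h.
Proof.
move=> H; apply: contR => x e e0; exists e => // y xy.
exact: le_lt_trans (H x y) xy.
Qed.
Lemma c1 (c : RR) : continuous (fun x : RR => `|x - c|).
Proof.
apply: lip1 => x y; apply: le_trans (ler_dist_dist _ _) _.
by rewrite (_ : x - c - (y - c) = x - y) //; lra.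
Qed.
Lemma c2 (c : RR) : continuous (fun x : RR => c - x).
Proof.
apply: lip1 => x y; rewrite (_ : c - x - (c - y) = - (x - y)) ?normrN //; lra.
Qed.
Lemma ccomp k (j : 'I_k) (h : RR -> RR) : continuous h -> continuous (fun v : 'rV[RR]_k => h (v ord0 j)).
Proof.
move=> ch v; apply: (continuous_comp (f := fun v : 'rV[RR]_k => v ord0 j)).
  exact: coord_continuous.
exact: ch.
Qed.
Lemma csum k m (F : 'I_m -> 'rV[RR]_k -> RR) : (forall j, continuous (F j)) ->
  continuous (fun v => \sum_j F j v).
Proof.
move=> cF.
suff : forall s : seq 'I_m, continuous (fun v => \sum_(j <- s) F j v) by apply.
elim=> [|a s IH].
- under eq_fun do rewrite big_nil; exact: cst_continuous.
- under eq_fun do rewrite big_cons.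
  move=> v; apply: (@continuousD _ RR^o _ (F a) (fun v => \sum_(j <- s) F j v)); [exact: cF|exact: IH].
Qed.

Lemma split_l m n (i : 'I_m) : fintype.split (lshift n i) = inl i.
Proof. exact: (unsplitK (inl i)). Qed.
Lemma split_r m n (i : 'I_n) : fintype.split (rshift m i) = inr i.
Proof. exact: (unsplitK (inr i)). Qed.

Section Theta.
Variables (n : nat) (a : 'I_n -> rat).

Definition th_args (j : 'I_(n + n)) : formula :=
  match fintype.split j with inl i => FPhi 1 i n | inr i => FPhi (a i) i n end.

Definition th_c (j : 'I_(n + n)) (x : RR) : RR :=
  match fintype.split j with inl i => `|x - ratr (a i)| | inr i => ratr (a i) - x end.

Definition th_u (v : 'rV[RR]_(n + n)) : RR := \sum_j th_c j (v ord0 j).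

Definition Theta : formula := FInf n (FConn th_u th_args).

Definition Tval (g : 'I_n -> RR -> RR) (k : RR -> RR) : RR :=
  \sum_i `|phi 1 (g i) k - ratr (a i)| + \sum_i (ratr (a i) - phi (a i) (g i) k).

Lemma Theta_wf : wf Theta.
Proof.
rewrite /= ; split; last by move=> j; rewrite /th_args; case: fintype.split.
apply: csum => j; apply: ccomp; rewrite /th_c; case: fintype.split => i.
- exact: c1.
- exact: c2.
Qed.

Lemma Theta_free x : free_in x Theta -> (x < n)%N.
Proof.
rewrite /= => -[xn [j]]; rewrite /th_args; case: fintype.split => i /= [->|E];
  by [exact: ltn_ord | exfalso; apply: xn].
Qed.

Lemma upd_env (g : 'I_n -> RR -> RR) k (i : 'I_n) : upd (env g) n k i = g i.
Proof. by rewrite /upd ifN_eq ?env_ord // neq_ltn ltn_ord. Qed.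

Lemma upd_env_n (g : 'I_n -> RR -> RR) k : upd (env g) n k n = k.
Proof. by rewrite /upd eqxx. Qed.

Lemma Theta_ev (g : 'I_n -> RR -> RR) : ev (env g) Theta = inf [set Tval g k | k in M01].
Proof.
rewrite /=; congr (inf (_ @` _)); apply/funext => k.
rewrite /th_u big_split_ord /Tval; congr (_ + _); apply: eq_bigr => i _;
  rewrite mxE /th_c /th_args ?split_l ?split_r /= upd_env upd_env_n //.
Qed.

End Theta.

Definition clamp (x : RR) : RR := if x <= 0 then 0 else if x <= 1 then x else 1.

Lemma clamp_cases x : [\/ x <= 0 /\ clamp x = 0, (0 <= x <= 1) /\ clamp x = x
  | 1 <= x /\ clamp x = 1].
Proof.
rewrite /clamp; have [x0|x0] := lerP x 0.
- by apply: Or31.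
- have [x1|x1] := lerP x 1.
  + by apply: Or32; split => //; rewrite (ltW x0).
  + by apply: Or33; split => //; exact: ltW.
Qed.

Lemma clamp_lip x y : `|clamp x - clamp y| <= `|x - y|.
Proof.
have h1 := ler_norm (x - y); have h2 := ler_norm (y - x); rewrite distrC in h2.
have [[a b]|[/andP[a a'] b]|[a b]] := clamp_cases x;
have [[c d]|[/andP[c c'] d]|[c d]] := clamp_cases y; rewrite b d;
  rewrite ler_norml; apply/andP; split; lra.
Qed.

Lemma clamp_mono x y : x <= y -> clamp x <= clamp y.
Proof.
move=> xy.
have [[a b]|[/andP[a a'] b]|[a b]] := clamp_cases x;
have [[c d]|[/andP[c c'] d]|[c d]] := clamp_cases y; rewrite b d; lra.
Qed.

Lemma clamp_range x : 0 <= clamp x <= 1.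
Proof.
have [[a b]|[/andP[a a'] b]|[a b]] := clamp_cases x; rewrite b; apply/andP; split; lra.
Qed.

Lemma clamp0 x : x <= 0 -> clamp x = 0.
Proof.
move=> x0; have [[a b]|[/andP[a a'] b]|[a b]] := clamp_cases x; rewrite b //; lra.
Qed.

Lemma clamp1 x : 1 <= x -> clamp x = 1.
Proof.
move=> x1; have [[a b]|[/andP[a a'] b]|[a b]] := clamp_cases x; rewrite b //; lra.
Qed.

Lemma ivt01 (h : RR -> RR) a b v : cont01 h -> 0 <= a -> a <= b -> b <= 1 ->
  h a <= v <= h b -> exists2 t, a <= t <= b & h t = v.
Proof.
move=> ch a0 ab b1 hv.
have cw : {within `[a, b], continuous h}.
  apply/withinP => x; rewrite /= in_itv /= => /andP[ax xb] e e0.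
  have Ix : I01 x by rewrite /I01; apply/andP; split; lra.
  have [d d0 Hd] := ch x Ix e e0; exists d => // y; rewrite /= in_itv /= => /andP[ay yb].
  by apply: Hd; rewrite /I01; apply/andP; split; lra.
have [|t tab ht] := @IVT _ h a b v ab cw.
  case/andP: hv => h1 h2; apply/andP; split.
  - by rewrite ge_min h1.
  - by rewrite le_max h2 orbT.
by exists t => //; move: tab; rewrite in_itv.
Qed.

Lemma steep_M (c r : RR) : 0 < r -> 0 <= c -> 1 <= (1 - c) * r ->
  M01r (fun t => clamp ((t - c) * r)).
Proof.
move=> r0 c0 cr; constructor.
- move=> x Ix e e0; exists (e / r); first by rewrite divr_gt0.
  move=> y Iy xy; apply: le_lt_trans (clamp_lip _ _) _.
  rewrite (_ : (x - c) * r - (y - c) * r = (x - y) * r); last by rewrite -mulrBl; congr (_ * _); lra.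
  by rewrite normrM (gtr0_norm r0); move: xy; rewrite ltr_pdivlMr.
- move=> s t _ _ st; apply: clamp_mono; rewrite ler_pM2r //; lra.
- by move=> t _; exact: clamp_range.
- apply: clamp0; rewrite (_ : (0 - c) * r = - (c * r)); last by rewrite add0r mulNr.
  by rewrite oppr_le0 mulr_ge0 // ltW.
- exact: clamp1.
Qed.

Lemma term_ge0 a (g k : RR -> RR) : M01r g -> M01r k -> (0 <= a <= 1)%R ->
  ratr a - phi a g k >= 0.
Proof.
move=> Mg Mk a01.
have [t It ft] := phi_ex Mg Mk a01.
rewrite (phi_val Mg Mk a01 It ft) -ft; have := mrange Mk It; case/andP => ? ?; lra.
Qed.

Lemma rat01 : (0 <= (1 : rat) <= 1)%R.
Proof. by []. Qed.

Lemma B1 n (f : 'I_n -> RR -> RR) (a : 'I_n -> rat) t0 (eta : RR) :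
  (forall i, M01r (f i)) -> I01 t0 -> (forall i, (0 <= a i <= 1)%R) -> 0 < eta ->
  (forall i, `|ratr (a i) - f i t0| <= eta) ->
  exists2 k, M01 k & Tval a f k <= \sum_(i < n) (eta + eta) + \sum_(i < n) (eta + eta).
Proof.
move=> Mf It0 a01 eta0 ha.
have [del del0 Hdel] := @finite_delta _ (fun i d => forall s, I01 s -> `|t0 - s| < d ->
    `|f i t0 - f i s| < eta)
  (fun i d d' d'0 dd H s Is ts => H s Is (lt_le_trans ts dd))
  (fun i => mc (Mf i) It0 eta0).
pose dl : RR := Num.min (del / 2) 1.
have dl0 : 0 < dl by rewrite lt_min ltr01 divr_gt0.
have dl1 : dl <= 1 by rewrite ge_min lexx orbT.
have dl2 : dl < del by apply: le_lt_trans (_ : del / 2 < del); [rewrite ge_min lexx|lra].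
pose c : RR := if t0 - dl <= 0 then 0 else t0 - dl.
have [c0 ct0 t0c c1] : [/\ 0 <= c, c <= t0, t0 <= c + dl & c + dl <= 1].
  case/andP: It0 => ? ?; rewrite /c; case: ifP => h; split; lra.
pose r : RR := dl^-1.
have r0 : 0 < r by rewrite invr_gt0.
have dlr : dl * r = 1 by rewrite mulfV // gt_eqF.
have cr : 1 <= (1 - c) * r.
  by rewrite -dlr ler_pM2r //; lra.
pose k := fun t => clamp ((t - c) * r).
have Mk : M01r k by apply: steep_M.
exists k; first exact: M_inM.
rewrite /Tval; apply: lerD; apply: ler_sum => i _.
- have cf : cont01 (fun t => f i t + k t) := cont01_add (mc (Mf i)) (mc Mk).
  have kc : k c = 0 by rewrite /k subrr mul0r clamp0.
  have kcd : k (c + dl) = 1.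
    by rewrite /k (_ : c + dl - c = dl) ?dlr ?clamp1 //; lra.
  have cdl : c <= c + dl by lra.
  have hv : f i c + k c <= 1 <= f i (c + dl) + k (c + dl).
    rewrite kc kcd addr0; apply/andP; split.
    * have Ic : I01 c by rewrite /I01; apply/andP; split; lra.
      by case/andP: (mrange (Mf i) Ic).
    * have Ic : I01 (c + dl) by rewrite /I01; apply/andP; split; lra.
      case/andP: (mrange (Mf i) Ic) => ? ?; lra.
  have [ti /andP[cti tic] hti] := ivt01 cf c0 cdl c1 hv.
  have Iti : I01 ti by rewrite /I01; apply/andP; split; lra.
  rewrite (phi_val (Mf i) Mk rat01 Iti); last by rewrite rmorph1.
  have := Hdel i ti Iti; rewrite (_ : `|t0 - ti| < del) => [/(_ isT) h|]; last first.
    by rewrite ltr_norml; apply/andP; split; lra.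
  have := ha i; rewrite ler_norml ltr_norml in h *; move: h => /andP[? ?] /andP[? ?].
  rewrite ler_norml; apply/andP; split; lra.
- have [s Is fs] := phi_ex (Mf i) Mk (a01 i).
  rewrite (phi_val (Mf i) Mk (a01 i) Is fs) -fs.
  have [sc|cs] := lerP s c.
  + have -> : k s = 0 by rewrite /k clamp0 // -(mul0r r) ler_pM2r //; lra.
    lra.
  + have Ic : I01 c by rewrite /I01; apply/andP; split; case/andP: It0 => ? ?; lra.
    have := mmono (Mf i) Ic Is (ltW cs).
    have := Hdel i c Ic; rewrite (_ : `|t0 - c| < del) => [/(_ isT) h|]; last first.
      by rewrite ger0_norm; lra.
    have := ha i; rewrite ler_norml ltr_norml in h *; move: h => /andP[? ?] /andP[? ?].
    lra.
Qed.

Lemma sum_term_le n (F : 'I_n -> RR) i : (forall j, 0 <= F j) -> F i <= \sum_j F j.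
Proof. by move=> H; rewrite (bigD1 i) //= lerDl; apply: sumr_ge0 => j _. Qed.

Lemma B2 n (g : 'I_n -> RR -> RR) (a : 'I_n -> rat) k (eps : RR) :
  (forall i, M01r (g i)) -> (forall i, (0 <= a i <= 1)%R) -> M01r k -> 0 < eps -> eps <= 1 ->
  Tval a g k < eps ->
  exists2 s, I01 s & forall i, `|g i s - ratr (a i)| < eps + eps.
Proof.
move=> Mg a01 Mk e0 e1 HT.
have S1 : 0 <= \sum_i `|phi 1 (g i) k - ratr (a i)| by apply: sumr_ge0 => i _.
have S2 : 0 <= \sum_i (ratr (a i) - phi (a i) (g i) k).
  by apply: sumr_ge0 => i _; apply: term_ge0.
have T1 : forall i, `|phi 1 (g i) k - ratr (a i)| < eps.
  move=> i; apply: le_lt_trans HT; rewrite /Tval.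
  apply: le_trans (@sum_term_le n (fun j => `|phi 1 (g j) k - ratr (a j)|) i _) _;
    first by move=> j.
  by rewrite lerDl.
have T2 : forall i, ratr (a i) - phi (a i) (g i) k < eps.
  move=> i; apply: le_lt_trans HT; rewrite /Tval.
  apply: le_trans (@sum_term_le n (fun j => ratr (a j) - phi (a j) (g j) k) i _) _;
    first by move=> j; apply: term_ge0.
  by rewrite lerDr.
have hv : k 0 <= eps <= k 1 by rewrite (m0 Mk) (m1 Mk) e1 ltW.
have [s /andP[s0 s1] ks] := ivt01 (mc Mk) (lexx 0) ler01 (lexx 1) hv.
have Is : I01 s by rewrite /I01 s0 s1.
exists s => // i.
have [t It ft] := phi_ex (Mg i) Mk rat01.
have [u Iu fu] := phi_ex (Mg i) Mk (a01 i).
have := T1 i; have := T2 i.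
rewrite (phi_val (Mg i) Mk rat01 It ft) (phi_val (Mg i) Mk (a01 i) Iu fu).
rewrite rmorph1 in ft.
move=> h2 h1.
have lo : ratr (a i) - eps < g i s.
  have us : u < s.
    rewrite ltNge; apply/negP => su.
    have := mmono Mk Is Iu su; lra.
  have := mmono (Mg i) Iu Is (ltW us); lra.
have hi : g i s < ratr (a i) + eps + eps.
  move: h1; rewrite ltr_norml => /andP[? ?].
  have [ekt|kte] := ltrP eps (k t).
  + have st : s < t.
      rewrite ltNge; apply/negP => ts.
      have := mmono Mk It Is ts; lra.
    have := mmono (Mg i) Is It (ltW st); lra.
  + case/andP: (mrange (Mg i) Is) => ? ?; lra.
rewrite ltr_norml; apply/andP; split; lra.
Qed.

Lemma B3 n (g : 'I_n -> RR -> RR) (p : 'I_n -> RR) :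
  (forall i, M01r (g i)) -> (forall i, I01 (p i)) ->
  (forall e : RR, 0 < e -> exists2 s, I01 s & forall i, `|g i s - p i| < e) ->
  exists2 s, I01 s & forall i, g i s = p i.
Proof.
move=> Mg Ip Happ.
pose S := [set t : RR | I01 t /\ (t = 0 \/ exists i, g i t < p i)].
have S0 : S 0 by split; [exact: I01_0|left].
have ubS : ubound S 1 by move=> t [/andP[_ ?] _].
have hsS : has_sup S by split; [exists 0|exists 1].
pose s := sup S.
have s0 : 0 <= s by apply: ub_le_sup => //; exists 1.
have s1 : s <= 1 by apply: ge_sup => //; exists 0.
have Is : I01 s by rewrite /I01 s0 s1.
exists s => // j; apply/le_anti/andP; split.
- rewrite leNgt; apply/negP => pg.
  pose dd := (g j s - p j) / 2.
  have dd0 : 0 < dd by rewrite divr_gt0 // subr_gt0.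
  have ddE : dd + dd = g j s - p j by rewrite /dd; lra.
  have [d d0 Hd] := mc (Mg j) Is dd0.
  have [x Sx sx] := sup_adherent d0 hsS; rewrite -/s in sx.
  have xs : x <= s by apply: ub_le_sup => //; exists 1.
  case: Sx => Ix Sx.
  have hx := Hd x Ix; rewrite (_ : `|s - x| < d) in hx; last by rewrite ger0_norm; lra.
  have {}hx := hx isT.
  case: Sx => [x0|[i gi]].
  + move: hx; rewrite x0 (m0 (Mg j)) subr0 ltr_norml => /andP[? ?].
    case/andP: (Ip j) => ? ?; lra.
  +     pose e := Num.min dd (p i - g i x).
    have e0 : 0 < e by rewrite lt_min dd0 subr_gt0 gi.
    have edd : e <= dd by rewrite ge_min lexx.
    have ep : e <= p i - g i x by rewrite ge_min lexx orbT.
    have [y Iy Hy] := Happ e e0.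
    have := Hy i; have := Hy j; rewrite !ltr_norml => /andP[? ?] /andP[? ?].
    move: hx; rewrite ltr_norml => /andP[? ?].
    have [yx|xy] := lerP y x.
    * have := mmono (Mg i) Iy Ix yx; lra.
    * have := mmono (Mg j) Ix Iy (ltW xy); lra.
- rewrite leNgt; apply/negP => gp.
  have [s1'|s1'] := eqVneq s 1.
    by move: gp; rewrite s1' (m1 (Mg j)); case/andP: (Ip j) => _; rewrite leNgt => /negP.
  have sl1 : s < 1 by rewrite lt_neqAle s1' s1.
  pose dd := p j - g j s.
  have dd0 : 0 < dd by rewrite subr_gt0.
  have [d d0 Hd] := mc (Mg j) Is dd0.
  pose t := Num.min (s + d / 2) 1.
  have ts : s < t by rewrite lt_min sl1 andbT; lra.
  have t1 : t <= 1 by rewrite ge_min lexx orbT.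
  have td : t <= s + d / 2 by rewrite ge_min lexx.
  have It : I01 t by rewrite /I01 t1 andbT; lra.
  have := Hd t It; rewrite (_ : `|s - t| < d) => [/(_ isT)|]; last first.
    by rewrite ltr0_norm ?subr_lt0 //; lra.
  rewrite ltr_norml => /andP[h _].
  have St : S t by split => //; right; exists j; rewrite /dd in h; lra.
  have : t <= s by apply: ub_le_sup => //; exists 1.
  lra.
Qed.

Lemma rat_approx (x eta : RR) : I01 x -> 0 < eta ->
  exists q : rat, (0 <= q <= 1)%R /\ `|ratr q - x| <= eta.
Proof.
move=> /andP[x0 x1] e0.
pose lo : RR := if x - eta <= 0 then 0 else x - eta.
pose hi : RR := if 1 <= x + eta then 1 else x + eta.
have [l0 lx le] : [/\ 0 <= lo, lo < x + eta & x - eta <= lo].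
  by rewrite /lo; case: ifP => h; split; lra.
have [h1 hx he] : [/\ hi <= 1, x - eta < hi & hi <= x + eta].
  by rewrite /hi; case: ifP => h; split; lra.
have lh : lo < hi by rewrite /lo /hi; case: ifP => ?; case: ifP => ?; lra.
have [q] := rat_in_itvoo lh; rewrite in_itv /= => /andP[lq qh].
exists q; split.
- apply/andP; split.
  + by rewrite -(ler_rat RR) rmorph0; lra.
  + by rewrite -(ler_rat RR) rmorph1; lra.
- rewrite ler_norml; apply/andP; split; lra.
Qed.

Lemma Tval_ge0 n (g : 'I_n -> RR -> RR) (a : 'I_n -> rat) k :
  (forall i, M01r (g i)) -> (forall i, (0 <= a i <= 1)%R) -> M01r k -> 0 <= Tval a g k.
Proof.
move=> Mg a01 Mk; apply: addr_ge0; apply: sumr_ge0 => i _ //.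
exact: term_ge0.
Qed.

Lemma dirB_sub n (f g : 'I_n -> RR -> RR) : (forall i, inM (f i)) -> (forall i, inM (g i)) ->
  same_type f g -> im f `<=` im g.
Proof.
move=> Hf Hg st _ [t0 It0 <-].
have Mf : forall i, M01r (f i) by move=> i; exact: inM_M.
have Mg : forall i, M01r (g i) by move=> i; exact: inM_M.
rewrite I01E in It0.
have Ip : forall i, I01 (f i t0) by move=> i; exact: mrange.
suff [s Is Hs] : exists2 s, I01 s & forall i, g i s = f i t0.
  by exists s; [rewrite I01E|apply/funext => i; exact: Hs].
apply: B3 => // e e0.
pose m : RR := Num.min e 1.
have m0 : 0 < m by rewrite lt_min e0 ltr01.
have me : m <= e by rewrite ge_min lexx.
have m1 : m <= 1 by rewrite ge_min lexx orbT.
pose N : RR := n%:R.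
have N0 : 0 <= N by rewrite /N ler0n.
pose eta : RR := m / (N * 8 + 3).
have D0 : 0 < N * 8 + 3 by lra.
have eta0 : 0 < eta by rewrite divr_gt0.
have etaE : N * 8 * eta + 3 * eta = m.
  by rewrite -mulrDl /eta mulrC divfK // gt_eqF.
pose X := N * eta.
have X0 : 0 <= X by rewrite mulr_ge0 // ltW.
have XE : X * 8 + eta * 3 = m by rewrite -etaE /X; lra.
have [a Ha] := fin_all_exists (fun i => rat_approx (Ip i) eta0).
have a01 : forall i, (0 <= a i <= 1)%R by move=> i; case: (Ha i).
have ha : forall i, `|ratr (a i) - f i t0| <= eta by move=> i; case: (Ha i).
have [k Mk Hk] := B1 Mf It0 a01 eta0 ha.
have SE : \sum_(i < n) (eta + eta) = X + X.
  by rewrite sumr_const card_ord -mulr_natl /X /N; lra.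
rewrite SE in Hk.
have Teq : ev (env f) (Theta a) = ev (env g) (Theta a).
  apply: st; first exact: Theta_wf.
  exact: Theta_free.
rewrite !Theta_ev in Teq.
have lbf : has_lbound [set Tval a f k0 | k0 in M01].
  by exists 0 => _ [k0 Mk0 <-]; apply: Tval_ge0 => //; exact: inM_M.
have Tf : inf [set Tval a f k0 | k0 in M01] <= X + X + (X + X).
  apply: le_trans Hk; apply: ge_inf => //; by exists k.
pose eps := X + X + (X + X) + eta.
have eps0 : 0 < eps by rewrite /eps; lra.
have eps1 : eps <= 1 by rewrite /eps; lra.
have [k' Mk' Hk'] : exists2 k', M01 k' & Tval a g k' < eps.
  case: (pselect (exists2 k', M01 k' & Tval a g k' < eps)) => // H; exfalso.
  have : eps <= inf [set Tval a g k0 | k0 in M01].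
    apply: lb_le_inf; first by exists (Tval a g id), id => //; exact: inM_id.
    move=> _ [k0 Mk0 <-]; rewrite leNgt; apply/negP => h; apply: H.
    by exists k0.
  rewrite -Teq /eps; lra.
have [s Is Hs] := B2 Mg a01 (inM_M Mk') eps0 eps1 Hk'.
have epsE : eps + eps + eta = m by rewrite /eps; lra.
exists s => // i; have := Hs i; have := ha i.
rewrite !ler_norml !ltr_norml => /andP[? ?] /andP[? ?]; apply/andP; split; lra.
Qed.

Unset Implicit Arguments.

Theorem mainTheorem14 (n : nat) (f g : 'I_n -> RR -> RR) :
  (forall i, inM (f i)) -> (forall i, inM (g i)) ->
  (same_type f g <-> im f = im g).
Proof.
move=> Hf Hg; split.
- move=> st; apply/seteqP; split; first exact: dirB_sub.
  apply: dirB_sub => // p wp fv; symmetry; exact: st.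
- exact: dirA.
Qed.
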